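(* Let $f_1,\dots,f_m:\mathbb R^n\to\mathbb R$ be continuously differentiable with $\nabla f_j$ being $L_j$-Lipschitz, and set $L=\max_j L_j$. Let $C_1>0$, $\tau>0$ and $x,y\in\mathbb R^n$ with $\|x\|+\|y\|\le C_1$. Then $$\Big\|\mathrm{proj}_{C(y)}\Big(\frac{y-x}{\tau}\Big)-\mathrm{proj}_{C(x)}\Big(\frac{y-x}{\tau}\Big)\Big\|\le\sqrt{C_2L}\,\|x-y\|^{1/2}+\sqrt{\frac{3L}{\tau}}\,\|x-y\|,$$ where $C_2:=LC_1+2\max_{1\le j\le m}\|\nabla f_j(0)\|$.
   Context: $C(x)=\mathrm{conv}\{\nabla f_1(x),\dots,\nabla f_m(x)\}$, and $\mathrm{proj}_C(v)$ is the Euclidean projection of $v$ onto the closed convex set $C$. (In the paper this is applied to the iterates $x_k,y_k$ of a multiobjective accelerated proximal gradient method, which are bounded by a constant $C_1$.) *)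

(* Defs.v *)
From HB Require Import structures.
From mathcomp Require Import all_boot all_order all_algebra.
From mathcomp Require Import all_classical all_reals all_analysis.
Set Implicit Arguments. Unset Strict Implicit. Unset Printing Implicit Defensive.
Import Order.TTheory GRing.Theory Num.Theory.
Import numFieldNormedType.Exports.
Local Open Scope classical_set_scope.
Local Open Scope ring_scope.

Section Defs.
Variables (R : realType) (n : nat).

Definition dotv (u v : 'rV[R]_n) : R := \sum_(i < n) u ord0 i * v ord0 i.
Definition enorm (u : 'rV[R]_n) : R := Num.sqrt (dotv u u).

Definition convhull (m : nat) (a : 'I_m -> 'rV[R]_n) : set 'rV[R]_n :=
  [set p | exists lam : 'I_m -> R, (forall j, 0 <= lam j) /\
           \sum_(j < m) lam j = 1 /\ p = \sum_(j < m) lam j *: a j].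

(* Euclidean projection of v onto a set C: a point of C at minimal
   Euclidean distance from v (chosen by xget; unique for closed convex
   nonempty C). *)
Definition is_proj (C : set 'rV[R]_n) (v p : 'rV[R]_n) : Prop :=
  C p /\ forall q, C q -> enorm (v - p) <= enorm (v - q).
Definition projC (C : set 'rV[R]_n) (v : 'rV[R]_n) : 'rV[R]_n :=
  xget 0 [set p | is_proj C v p].

Definition is_gradient (f : 'rV[R]_n -> R) (g : 'rV[R]_n -> 'rV[R]_n) : Prop :=
  forall x, differentiable f x /\
    ('d f x : 'rV[R]_n -> R) = (fun v => dotv (g x) v).

Definition lipschitz_on_Rn (g : 'rV[R]_n -> 'rV[R]_n) (K : R) : Prop :=
  forall x y, enorm (g x - g y) <= K * enorm (x - y).

End Defs.

(* Main.v *)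
Require Import Defs.
From HB Require Import structures.
From mathcomp Require Import all_boot all_order all_algebra.
From mathcomp Require Import all_classical all_reals all_analysis.
From mathcomp Require Import ring lra.
Import Order.TTheory GRing.Theory Num.Theory.
Import numFieldNormedType.Exports.
Local Open Scope classical_set_scope.
Local Open Scope ring_scope.

Section Aux.
Variables (R : realType) (n : nat).
Implicit Types (u v z : 'rV[R]_n).

Lemma dotvC u v : dotv u v = dotv v u.
Proof. by apply: eq_bigr => i _; rewrite mulrC. Qed.

Lemma dotvDl u v z : dotv (u + v) z = dotv u z + dotv v z.
Proof. by rewrite /dotv -big_split; apply: eq_bigr => i _; rewrite mxE mulrDl. Qed.

Lemma dotvZl a u v : dotv (a *: u) v = a * dotv u v.
Proof. by rewrite /dotv mulr_sumr; apply: eq_bigr => i _; rewrite mxE mulrA. Qed.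

Lemma dotvNl u v : dotv (- u) v = - dotv u v.
Proof. by rewrite -scaleN1r dotvZl mulN1r. Qed.

Lemma dotvBl u v z : dotv (u - v) z = dotv u z - dotv v z.
Proof. by rewrite dotvDl dotvNl. Qed.

Lemma dotvDr u v z : dotv z (u + v) = dotv z u + dotv z v.
Proof. by rewrite dotvC dotvDl !(dotvC z). Qed.

Lemma dotvBr u v z : dotv z (u - v) = dotv z u - dotv z v.
Proof. by rewrite dotvC dotvBl !(dotvC z). Qed.

Lemma dotvZr a u v : dotv v (a *: u) = a * dotv v u.
Proof. by rewrite dotvC dotvZl dotvC. Qed.

Lemma dotv_ge0 u : 0 <= dotv u u.
Proof. by apply: sumr_ge0 => i _; rewrite -expr2 sqr_ge0. Qed.

Lemma dotv_eq0 u : dotv u u = 0 -> forall v, dotv u v = 0.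
Proof.
move=> h v; apply: big1 => i _.
have := @psumr_eq0P _ _ predT (fun i => u ord0 i * u ord0 i) _ h i isT.
by move=> /(_ (fun i _ => ltac:(by rewrite -expr2 sqr_ge0)))/eqP; rewrite mulf_eq0 orbb => /eqP ->; rewrite mul0r.
Qed.

Lemma enorm_ge0 u : 0 <= enorm u.
Proof. exact: sqrtr_ge0. Qed.

Lemma enorm_sq u : enorm u ^+ 2 = dotv u u.
Proof. by rewrite sqr_sqrtr // dotv_ge0. Qed.

Lemma CS u v : dotv u v <= enorm u * enorm v.
Proof.
set a := enorm u; set b := enorm v.
have a0 : 0 <= a by apply: enorm_ge0.
have b0 : 0 <= b by apply: enorm_ge0.
have [ea|an0] := eqVneq a 0.
  have : dotv u u = 0 by rewrite -enorm_sq -/a ea expr0n.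
  by move/dotv_eq0 => ->; rewrite ea mul0r.
have [eb|bn0] := eqVneq b 0.
  have : dotv v v = 0 by rewrite -enorm_sq -/b eb expr0n.
  by move/dotv_eq0 => h; rewrite dotvC h eb mulr0.
have ap : 0 < a by rewrite lt0r an0.
have bp : 0 < b by rewrite lt0r bn0.
have := dotv_ge0 (b *: u - a *: v).
rewrite !(dotvBl, dotvBr, dotvZl, dotvZr) (dotvC v u) -!enorm_sq -/a -/b => h.
have h2 : 0 <= 2 * (a * b) * (a * b - dotv u v).
  nra.
have: 0 <= a * b - dotv u v.
  by rewrite -(pmulr_rge0 _ (_ : 0 < 2 * (a * b))) // mulr_gt0 // mulr_gt0.
by rewrite subr_ge0.
Qed.

Lemma sqrt_le_of u (c : R) : 0 <= c -> dotv u u <= c ^+ 2 -> enorm u <= c.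
Proof.
move=> c0 h; rewrite -(ger0_norm c0) -sqrtr_sqr /enorm.
by rewrite ler_sqrt // sqr_ge0.
Qed.

Lemma enorm_triangle u v : enorm (u + v) <= enorm u + enorm v.
Proof.
apply: sqrt_le_of; first by rewrite addr_ge0 // enorm_ge0.
rewrite !(dotvDl, dotvDr) (dotvC v u) -!enorm_sq.
have := CS u v; nra.
Qed.

Lemma enormZ a u : enorm (a *: u) = `|a| * enorm u.
Proof.
rewrite /enorm dotvZl dotvZr mulrA -expr2 sqrtrM ?sqr_ge0 //.
by rewrite sqrtr_sqr.
Qed.

Lemma enormN u : enorm (- u) = enorm u.
Proof. by rewrite -scaleN1r enormZ normrN normr1 mul1r. Qed.

Lemma enormB u v : enorm (u - v) = enorm (v - u).
Proof. by rewrite -enormN opprB. Qed.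

Lemma enorm0 : enorm (0 : 'rV[R]_n) = 0.
Proof. by rewrite -(scale0r (0 : 'rV[R]_n)) enormZ normr0 mul0r. Qed.

Lemma enorm_sum m (F : 'I_m -> 'rV[R]_n) :
  enorm (\sum_(j < m) F j) <= \sum_(j < m) enorm (F j).
Proof.
apply: (big_ind2 (fun x y => enorm x <= y)); first by rewrite enorm0.
  move=> a b c d h1 h2; apply: le_trans (enorm_triangle _ _) _; exact: lerD.
by [].
Qed.

Lemma convhull_bound m (a : 'I_m -> 'rV[R]_n) (B : R) p :
  (forall j, enorm (a j) <= B) -> convhull a p -> enorm p <= B.
Proof.
move=> hB [lam [l0 [l1 ->]]].
apply: (le_trans (@enorm_sum m (fun j => lam j *: a j))).
have -> : B = \sum_(j < m) lam j * B by rewrite -mulr_suml l1 mul1r.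
apply: ler_sum => j _; rewrite enormZ ger0_norm //; exact: ler_wpM2l.
Qed.

Lemma convhull_convex m (a : 'I_m -> 'rV[R]_n) p z t :
  0 <= t <= 1 -> convhull a p -> convhull a z -> convhull a (p + t *: (z - p)).
Proof.
move=> /andP[t0 t1] [l [l0 [l1 ->]]] [k [k0 [k1 ->]]].
exists (fun j => (1 - t) * l j + t * k j); split.
  by move=> j; rewrite addr_ge0 // mulr_ge0 // subr_ge0.
split.
  by rewrite big_split /= -!mulr_sumr l1 k1 !mulr1 subrK.
rewrite scalerBr !scaler_sumr -sumrB -!big_split /=; apply: eq_bigr => j _.
by rewrite !scalerA scalerDl mulrBl mul1r scalerBl [RHS]addrAC -addrA.
Qed.

Lemma expand_sq u v t :
  dotv (u - t *: v) (u - t *: v) = dotv u u - 2 * t * dotv u v + t ^+ 2 * dotv v v.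
Proof.
rewrite !(dotvBl, dotvBr, dotvZl, dotvZr) (dotvC v u); ring.
Qed.

Lemma variational m (a : 'I_m -> 'rV[R]_n) w p z :
  is_proj (convhull a) w p -> convhull a z -> dotv (w - p) (z - p) <= 0.
Proof.
move=> [Cp hp] Cz.
set d := dotv (w - p) (z - p); set s := dotv (z - p) (z - p).
have key : forall t, 0 < t <= 1 -> 2 * d <= t * s.
  move=> t /andP[t0 t1].
  have tt : 0 <= t <= 1 by rewrite t1 ltW.
  have := hp _ (convhull_convex _ _ _ _ _ tt Cp Cz).
  rewrite /enorm ler_sqrt ?dotv_ge0 // opprD addrA expand_sq -/d -/s.
  move=> h; have : 0 <= t * (t * s - 2 * d) by nra.
  by rewrite pmulr_rge0 // subr_ge0.
rewrite leNgt; apply/negP => dp.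
have s0 : 0 <= s by apply: dotv_ge0.
have ds : 0 < d + s by rewrite ltr_wpDr.
have := key (d / (d + s)).
rewrite divr_gt0 //= ler_pdivrMr // mul1r lerDl s0 => /(_ isT).
rewrite mulrAC ler_pdivlMr //.
nra.
Qed.
End Aux.
Section Ex.
Variables (R : realType).

Lemma cont_sum (T : topologicalType) k (F : 'I_k -> T -> R) :
  (forall j, continuous (F j)) -> continuous (fun x => \sum_(j < k) F j x).
Proof.
move=> hF x.
elim: (index_enum _) => [|j s IH].
  under eq_fun do rewrite big_nil. exact: cst_continuous.
under eq_fun do rewrite big_cons.
exact: (continuousD (hF j x) IH).
Qed.

Lemma proj_exists n m (hm : (0 < m)%N) (a : 'I_m -> 'rV[R]_n) (w : 'rV[R]_n) :
  exists p, is_proj (convhull a) w p.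
Proof.
pose comb (v : 'rV[R]_m) := \sum_(j < m) v ord0 j *: a j.
pose B := [set v : 'rV[R]_m | forall i, `[0, 1]%classic (v ord0 i)].
pose S := [set v : 'rV[R]_m | \sum_(j < m) v ord0 j = 1].
have cB : compact B.
  apply: (@rV_compact _ _ (fun=> `[(0:R), 1]%classic)) => _; exact: segment_compact.
have clS : closed S.
  apply: (@preimage_closed _ _ (fun v : 'rV[R]_m => \sum_(j < m) v ord0 j) [set x | x = 1]).
    move=> v _; apply: cont_sum => j; exact: coord_continuous.
  exact: closed_eq.
have cK : compact (B `&` S).
  apply: (subclosed_compact _ cB); last by apply: subIsetl.
  apply: closedI => //; exact: compact_closed (@norm_hausdorff _ _) cB.
pose f (v : 'rV[R]_m) := dotv (w - comb v) (w - comb v).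
have fE : f = fun v => \sum_(i < n) ((w ord0 i - \sum_(j < m) v ord0 j * a j ord0 i) *
                          (w ord0 i - \sum_(j < m) v ord0 j * a j ord0 i)).
  apply: funext => v; rewrite /f /dotv; apply: eq_bigr => i _.
  by rewrite !mxE summxE; under eq_bigr do rewrite mxE.
have cf : continuous f.
  rewrite fE; apply: cont_sum => i.
  have cG : continuous (fun v : 'rV[R]_m => w ord0 i - \sum_(j < m) v ord0 j * a j ord0 i).
    move=> v; apply: continuousB; first exact: cst_continuous.
    apply: cont_sum => j; move=> u; apply: (continuousM (@coord_continuous R 1 m ord0 j u)).
    exact: cst_continuous.
  move=> v; exact: (continuousM (cG v) (cG v)).
have i0 : 'I_m := Ordinal hm.
have K0 : (B `&` S) !=set0.
  exists (\row_j (if j == i0 then 1 else 0)); split.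
    move=> i; rewrite mxE /= in_itv /=; case: ifP => _; by rewrite ?lexx ?ler01.
  rewrite /S /=; under eq_bigr do rewrite mxE.
  by rewrite -big_mkcond /= big_pred1_eq.
have [c cKc cmin] := compact_EVT_min K0 cK (continuous_subspaceT cf).
move: (cKc); rewrite inE => -[cB' cS].
exists (comb c); split.
  exists (fun j => c ord0 j); split.
    by move=> j; have := cB' j; rewrite /= in_itv /= => /andP[].
  by split.
move=> q [mu [mu0 [mu1 ->]]].
have muK : (\row_j mu j) \in B `&` S.
  rewrite inE; split.
    move=> i; rewrite mxE /= in_itv /= mu0 /=.
    by rewrite -mu1 (bigD1 i) //= lerDl sumr_ge0.
  by rewrite /S /=; under eq_bigr do rewrite mxE.
have := cmin _ muK; rewrite /f /enorm -ler_sqrt ?dotv_ge0 //.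
suff -> : comb (\row_j mu j) = \sum_(j < m) mu j *: a j by [].
by apply: eq_bigr => j _; rewrite mxE.
Qed.
End Ex.
Lemma key_identity (R : realType) n (w P Q P' Q' : 'rV[R]_n) :
  dotv (P - Q) (P - Q) = dotv (w - P) (Q' - P) + dotv (w - P) (Q - Q')
    + (dotv (w - Q) (P' - Q) + dotv (w - Q) (P - P')).
Proof.
rewrite -!dotvDr [Q' - P + _]addrC [P' - Q + _]addrC !addrA !subrK.
have -> : Q - P = - (P - Q) by rewrite opprB.
rewrite dotvC [dotv (w - Q) _]dotvC dotvNl (addrC (- dotv (P - Q) (w - P))) -(@dotvBr R n (w - Q) (w - P) (P - Q)).
by rewrite opprB [w - Q + _]addrC addrA subrK.
Qed.

Theorem mainTheorem4 (R : realType) (n m : nat) (hm : (0 < m)%N)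
  (f : 'I_m -> 'rV[R]_n -> R) (g : 'I_m -> 'rV[R]_n -> 'rV[R]_n)
  (Lj : 'I_m -> R)
  (hgrad : forall j, is_gradient (f j) (g j))
  (hgcont : forall j, continuous (g j))
  (hL0 : forall j, 0 <= Lj j)
  (hLip : forall j, lipschitz_on_Rn (g j) (Lj j))
  (C1 tau : R) (hC1 : 0 < C1) (htau : 0 < tau)
  (x y : 'rV[R]_n) (hxy : enorm x + enorm y <= C1) :
  let L := \big[Num.max/0]_(j < m) Lj j in
  let C2 := L * C1 + 2 * \big[Num.max/0]_(j < m) enorm (g j 0) in
  let Cset := fun z => convhull (fun j => g j z) in
  let w := tau^-1 *: (y - x) in
  enorm (projC (convhull (fun j => g j y)) w - projC (convhull (fun j => g j x)) w)
    <= Num.sqrt (C2 * L) * Num.sqrt (enorm (x - y))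
       + Num.sqrt (3 * L / tau) * enorm (x - y).
Proof.
cbv zeta beta.
set L := \big[Num.max/0]_(j < m) Lj j.
set M := \big[Num.max/0]_(j < m) enorm (g j 0).
set C2 := L * C1 + 2 * M.
set w := tau^-1 *: (y - x).
have i0 : 'I_m := Ordinal hm.
have hL : forall j, Lj j <= L by move=> j; exact: le_bigmax.
have hM : forall j, enorm (g j 0) <= M by move=> j; exact: le_bigmax.
have L0 : 0 <= L by exact: (le_trans (hL0 i0) (hL i0)).
have M0 : 0 <= M by exact: (le_trans (enorm_ge0 _ _ _) (hM i0)).
set e := enorm (x - y).
have e0 : 0 <= e by apply: enorm_ge0.
have gbound : forall z j, enorm (g j z) <= M + L * enorm z.
  move=> z j; have -> : g j z = g j 0 + (g j z - g j 0) by rewrite addrC subrK.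
  apply: le_trans (enorm_triangle _ _ _ _) _; apply: lerD => //.
  apply: le_trans (hLip j z 0) _; rewrite subr0.
  by apply: ler_wpM2r => //; apply: enorm_ge0.
set P := projC (convhull (fun j => g j y)) w; set Q := projC (convhull (fun j => g j x)) w.
have hP : is_proj (convhull (fun j => g j y)) w P by apply: xgetPex; apply: proj_exists.
have hQ : is_proj (convhull (fun j => g j x)) w Q by apply: xgetPex; apply: proj_exists.
have [[lam [l0 [l1 Pe]]] _] := hP.
have [[mu [mu0 [mu1 Qe]]] _] := hQ.
set Q' := \sum_(j < m) mu j *: g j y.
set P' := \sum_(j < m) lam j *: g j x.
have V1 : dotv (w - P) (Q' - P) <= 0.
  by apply: (@variational _ _ _ _ _ _ _ hP); exists mu.
have V2 : dotv (w - Q) (P' - Q) <= 0.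
  by apply: (@variational _ _ _ _ _ _ _ hQ); exists lam.
have hQQ : enorm (Q - Q') <= L * e.
  apply: (@convhull_bound _ _ _ (fun j => g j x - g j y)).
    move=> j; apply: le_trans (hLip j x y) _; exact: ler_wpM2r.
  exists mu; do 2 split => //; rewrite Qe -sumrB; apply: eq_bigr => j _.
  by rewrite scalerBr.
have hPP : enorm (P - P') <= L * e.
  apply: (@convhull_bound _ _ _ (fun j => g j y - g j x)).
    move=> j; apply: le_trans (hLip j y x) _; rewrite enormB; exact: ler_wpM2r.
  exists lam; do 2 split => //; rewrite Pe -sumrB; apply: eq_bigr => j _.
  by rewrite scalerBr.
have hPb : enorm P <= M + L * enorm y.
  apply: (@convhull_bound _ _ _ (fun j => g j y) _ _ (gbound y)); exact: hP.1.
have hQb : enorm Q <= M + L * enorm x.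
  apply: (@convhull_bound _ _ _ (fun j => g j x) _ _ (gbound x)); exact: hQ.1.
have hw : enorm w = tau^-1 * e.
  by rewrite /w enormZ ger0_norm ?invr_ge0 ?ltW // enormB.
have A1 : enorm (w - P) <= tau^-1 * e + (M + L * enorm y).
  apply: le_trans (enorm_triangle _ _ _ _) _; rewrite enormN hw; exact: lerD.
have A2 : enorm (w - Q) <= tau^-1 * e + (M + L * enorm x).
  apply: le_trans (enorm_triangle _ _ _ _) _; rewrite enormN hw; exact: lerD.
have Le0 : 0 <= L * e by apply: mulr_ge0.
have T1 : dotv (w - P) (Q - Q') <= (tau^-1 * e + (M + L * enorm y)) * (L * e).
  apply: le_trans (CS _ _ _ _) _; apply: ler_pM => //; exact: enorm_ge0.
have T2 : dotv (w - Q) (P - P') <= (tau^-1 * e + (M + L * enorm x)) * (L * e).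
  apply: le_trans (CS _ _ _ _) _; apply: ler_pM => //; exact: enorm_ge0.
have Ssum : dotv (P - Q) (P - Q) <= (2 * (tau^-1 * e) + C2) * (L * e).
  rewrite (key_identity _ _ w P Q P' Q').
  have hC2 : 2 * M + L * (enorm x + enorm y) <= C2.
    by rewrite /C2 addrC lerD2r; apply: ler_wpM2l.
  have : (tau^-1 * e + (M + L * enorm y)) * (L * e) + (tau^-1 * e + (M + L * enorm x)) * (L * e)
      <= (2 * (tau^-1 * e) + C2) * (L * e).
    rewrite -mulrDl; apply: ler_wpM2r => //.
    move: hC2; rewrite mulrDr; lra.
  lra.
have C20 : 0 <= C2 by rewrite /C2 addr_ge0 ?mulr_ge0 // ltW.
have k0 : 0 <= 3 * L / tau by rewrite divr_ge0 ?mulr_ge0 // ltW.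
apply: sqrt_le_of.
  by rewrite addr_ge0 // mulr_ge0 // sqrtr_ge0.
have s1 := sqr_sqrtr (mulr_ge0 C20 L0).
have s2 := sqr_sqrtr e0.
have s3 := sqr_sqrtr k0.
have g1 := sqrtr_ge0 (C2 * L); have g2 := sqrtr_ge0 e; have g3 := sqrtr_ge0 (3 * L / tau).
have ti : 0 <= tau^-1 by rewrite invr_ge0 ltW.
have : (2 * (tau^-1 * e) + C2) * (L * e) <=
   (Num.sqrt (C2 * L) * Num.sqrt e + Num.sqrt (3 * L / tau) * e) ^+ 2.
  rewrite sqrrD !exprMn s1 s2 s3 mulr_natl.
  have : 0 <= (Num.sqrt (C2 * L) * Num.sqrt e) * (Num.sqrt (3 * L / tau) * e) by
    rewrite !mulr_ge0.
  have : 0 <= L * tau^-1 * e ^+ 2 by rewrite !mulr_ge0 // sqr_ge0.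
  rewrite /= mulrA; nra.
lra.
Qed.
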